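(* For every pair of integers $a,b$ with $2\leq a\leq b$, there exists a connected graph $G$ of some order $n\ge 3$ such that $px_k(G)=a$ and $rx_k(G)=b$ for each integer $k$ with $3\leq k\leq n$.
   Context: All graphs are finite, simple, undirected and connected. An edge-coloring of a graph assigns a color to each edge (adjacent edges may receive the same color). A tree in an edge-colored graph is proper if any two adjacent edges of the tree receive different colors, and rainbow if no two of its edges receive the same color. For $S\subseteq V(G)$, an $S$-tree is a subgraph of $G$ that is a tree containing all vertices of $S$. For a connected graph $G$ of order $n$ and an integer $k$ with $2\le k\le n$, an edge-coloring of $G$ is a $k$-proper coloring (resp. $k$-rainbow coloring) if for every set $S$ of $k$ vertices of $G$ there exists a proper (resp. rainbow) $S$-tree in $G$. The $k$-proper index $px_k(G)$ (resp. $k$-rainbow index $rx_k(G)$) is the minimum number of colors used in a $k$-proper coloring (resp. $k$-rainbow coloring) of $G$. *)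

(* Defs.v *)
From mathcomp Require Import all_boot.
Set Implicit Arguments.
Unset Strict Implicit.
Unset Printing Implicit Defensive.

Definition simple_graph (T : finType) (e : rel T) : Prop :=
  symmetric e /\ irreflexive e.

Definition graph_connected (T : finType) (e : rel T) : Prop :=
  forall x y : T, connect e x y.

Definition is_edge (T : finType) (e : rel T) (f : {set T}) : Prop :=
  exists x y : T, e x y /\ f = [set x; y].

Definition is_tree (T : finType) (e : rel T) (W : {set T}) (F : {set {set T}}) : Prop :=
  (forall f, f \in F -> is_edge e f /\ f \subset W) /\
  W != set0 /\
  (forall x y, x \in W -> y \in W ->
     connect (fun u v => [set u; v] \in F) x y) /\
  #|F| + 1 = #|W|.

(* An edge-coloring with (at most) m colors: a color for each 2-set
   (only its values on edges of G matter). *)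
Definition proper_edges (T : finType) (m : nat) (c : {set T} -> 'I_m)
  (F : {set {set T}}) : Prop :=
  forall f g, f \in F -> g \in F -> f != g -> f :&: g != set0 -> c f != c g.

Definition rainbow_edges (T : finType) (m : nat) (c : {set T} -> 'I_m)
  (F : {set {set T}}) : Prop :=
  {in F &, injective c}.

Definition k_proper_coloring (T : finType) (e : rel T) (k m : nat)
  (c : {set T} -> 'I_m) : Prop :=
  forall S : {set T}, #|S| = k ->
    exists W F, is_tree e W F /\ S \subset W /\ proper_edges c F.

Definition k_rainbow_coloring (T : finType) (e : rel T) (k m : nat)
  (c : {set T} -> 'I_m) : Prop :=
  forall S : {set T}, #|S| = k ->
    exists W F, is_tree e W F /\ S \subset W /\ rainbow_edges c F.

Definition is_min (P : nat -> Prop) (a : nat) : Prop :=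
  P a /\ forall m, m < a -> ~ P m.

Definition proper_index_is (T : finType) (e : rel T) (k a : nat) : Prop :=
  is_min (fun m => exists c : {set T} -> 'I_m, k_proper_coloring e k c) a.

Definition rainbow_index_is (T : finType) (e : rel T) (k a : nat) : Prop :=
  is_min (fun m => exists c : {set T} -> 'I_m, k_rainbow_coloring e k c) a.

(* Main.v *)
Require Import Defs.
From mathcomp Require Import all_boot zify.

Definition par (L j : nat) : nat := if j <= L then j.-1 else L.

Lemma par_le L j : par L j <= j.
Proof. rewrite /par; case: ifP => /=; lia. Qed.

Lemma par_lt L j : 0 < j -> par L j < j.
Proof. rewrite /par; case: ifP => /=; lia. Qed.


Definition edg (b L : nat) : rel 'I_b.+1 := fun u v =>
  ((0 < v) && (val u == par L v)) || ((0 < u) && (val v == par L u)).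

Definition parO (b L : nat) (j : 'I_b.+1) : 'I_b.+1 := inord (par L j).

Lemma parOE b L j : val (parO b L j) = par L j.
Proof. rewrite /parO /= inordK //; have := par_le L j; have := ltn_ord j; lia. Qed.

Definition E (b L : nat) (j : 'I_b.+1) : {set 'I_b.+1} := [set parO b L j; j].

Lemma conn_gen b L (r : rel 'I_b.+1) :
  (forall v : 'I_b.+1, 0 < v -> r (parO b L v) v /\ r v (parO b L v)) ->
  forall x y, connect r x y.
Proof.
move=> H.
have H0 : forall n (v : 'I_b.+1), v < n -> connect r ord0 v /\ connect r v ord0.
  elim=> [|n IH] v //= hv.
  case: (posnP v) => [v0|vp].
    by have -> : v = ord0 by apply: val_inj.
  have hp : parO b L v < n by rewrite parOE; have := par_lt L v vp; lia.
  have [c1 c2] := IH _ hp; have [r1 r2] := H _ vp.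
  split.
    by apply: connect_trans c1 (connect1 r1).
  by apply: connect_trans (connect1 r2) c2.
move=> x y.
have [_ a1] := H0 _ x (ltnSn _); have [a2 _] := H0 _ y (ltnSn _).
exact: connect_trans a1 a2.
Qed.

Lemma cut (T : finType) (r : rel T) (A : pred T) x y :
  connect r x y -> A x -> ~~ A y -> exists u v, [/\ r u v, A u & ~~ A v].
Proof.
move/connectP=> [p pth ->]; elim: p x pth => [|z p IH] x /=.
  by move=> _ ->.
move=> /andP[rxz pz] Ax NA.
case Az: (A z); first exact: IH Az NA.
by exists x, z; rewrite Az.
Qed.

Lemma extend (T : finType) n (X : {set T}) :
  #|X| + n <= #|T| -> exists S : {set T}, X \subset S /\ #|S| = #|X| + n.
Proof.
elim: n X => [|n IH] X h; first by exists X; rewrite addn0.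
have : 0 < #|~: X| by rewrite cardsCs setCK; lia.
case/card_gt0P => x; rewrite in_setC => xX.
have h' : #|x |: X| + n <= #|T|.
  by rewrite cardsU1 xX /= add1n addSn -addnS.
have [S [sub cS]] := IH _ h'.
exists S; split; last by rewrite cS cardsU1 xX /= add1n addSn -addnS.
by apply: subset_trans sub; apply: subsetUr.
Qed.

Lemma edg_sym b L : symmetric (edg b L).
Proof. by move=> u v; rewrite /edg orbC. Qed.

Lemma edg_irr b L : irreflexive (edg b L).
Proof.
move=> u; rewrite /edg orbb; apply/negP => /andP[h /eqP e].
by have := par_lt L u h; rewrite -e ltnn.
Qed.

Lemma edg_par b L (v : 'I_b.+1) : 0 < v -> edg b L (parO b L v) v /\ edg b L v (parO b L v).
Proof. by move=> h; rewrite /edg parOE eqxx h /= orbT. Qed.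

Lemma edg_E b L (x y : 'I_b.+1) : edg b L x y ->
  exists2 w : 'I_b.+1, 0 < w & [set x; y] = E b L w.
Proof.
rewrite /edg => /orP[/andP[h /eqP e]|/andP[h /eqP e]].
  exists y => //; rewrite /E; congr [set _; _]; apply: val_inj; by rewrite parOE.
exists x => //; rewrite /E setUC; congr [set _; _]; apply: val_inj; by rewrite parOE.
Qed.

Lemma E_inj b L (i j : 'I_b.+1) : 0 < i -> 0 < j -> E b L i = E b L j -> i = j.
Proof.
move=> hi hj eq.
have : i \in E b L j by rewrite -eq !inE eqxx orbT.
have : j \in E b L i by rewrite eq !inE eqxx orbT.
rewrite !inE => /orP[/eqP e1|/eqP //] /orP[/eqP e2|/eqP //].
have := par_lt L i hi; have := par_lt L j hj.
move: (congr1 val e1) (congr1 val e2); rewrite /= !parOE; lia.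
Qed.

Definition sideA (b L : nat) (j : 'I_b.+1) : pred 'I_b.+1 :=
  fun v => if j <= L then v < j else v == j.

Lemma cross b L (w j : 'I_b.+1) : 0 < w -> 0 < j ->
  sideA b L j (parO b L w) != sideA b L j w -> w = j.
Proof.
move=> hw hj; rewrite /sideA -!(inj_eq val_inj) /= parOE /par.
have hw' := ltn_ord w; have hj' := ltn_ord j.
move=> H; apply: val_inj => /=; move: H.
case: (leqP j L) => h1; case: (leqP w L) => h2 /=.
- by case: ltnP; case: ltnP => //= *; lia.
- by case: ltnP; case: ltnP => //= *; lia.
- by case: eqP; case: eqP => //= *; lia.
- by case: eqP; case: eqP => //= *; lia.
Qed.

Lemma side0j b L (j : 'I_b.+1) : 0 < j -> sideA b L j ord0 != sideA b L j j.
Proof.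
move=> hj; rewrite /sideA -!(inj_eq val_inj) /=.
by case: (leqP j L) => h; rewrite ?ltnn ?eqxx ?hj //; case: eqP => //; lia.
Qed.

Lemma force b L W F (j : 'I_b.+1) : is_tree (edg b L) W F -> ord0 \in W -> j \in W ->
  0 < j -> E b L j \in F.
Proof.
move=> [Hf [_ [Hc _]]] h0 hj jp.
pose A := fun v => sideA b L j v == sideA b L j ord0.
have NAj : ~~ A j by rewrite /A eq_sym side0j.
have [u [v [ruv Au NAv]]] := @cut _ _ A _ _ (Hc _ _ h0 hj) (eqxx _) NAj.
have [[x [y [exy fxy]]] _] := Hf _ ruv.
have [w wp ew] := edg_E _ _ _ _ exy.
rewrite fxy ew in ruv.
have dif : sideA b L j u != sideA b L j v.
  by move/eqP: Au => ->; rewrite eq_sym; exact: NAv.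
have uE : u \in E b L w by rewrite -ew -fxy !inE eqxx.
have vE : v \in E b L w by rewrite -ew -fxy !inE eqxx orbT.
move: uE vE; rewrite !inE => /orP[/eqP eu|/eqP eu] /orP[/eqP ev|/eqP ev].
- by move: dif; rewrite eu ev eqxx.
- have wj : w = j by apply: (@cross b L) => //; rewrite eu ev in dif.
  by rewrite -wj.
- have wj : w = j by apply: (@cross b L) => //; rewrite eu ev eq_sym in dif.
  by rewrite -wj.
- by move: dif; rewrite eu ev eqxx.
Qed.

Definition Fall b L : {set {set 'I_b.+1}} := [set E b L j | j in [set j : 'I_b.+1 | 0 < j]].

Lemma in_Fall b L f : f \in Fall b L -> exists2 j : 'I_b.+1, 0 < j & f = E b L j.
Proof. by case/imsetP => j; rewrite inE => jp ->; exists j. Qed.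

Lemma E_Fall b L (j : 'I_b.+1) : 0 < j -> E b L j \in Fall b L.
Proof. by move=> jp; apply/imsetP; exists j; rewrite ?inE. Qed.

Lemma Fall_tree b L : is_tree (edg b L) setT (Fall b L).
Proof.
split; [|split; [|split]].
- move=> f /in_Fall [j jp ->]; split; last exact: subsetT.
  by exists (parO b L j), j; have [h _] := edg_par b L j jp.
- by apply/set0Pn; exists ord0; rewrite inE.
- move=> x y _ _; apply: (@conn_gen b L) => v vp; split; first exact: E_Fall b L v vp.
  by rewrite setUC; exact: E_Fall b L v vp.
- rewrite cardsT card_ord /Fall card_in_imset; last first.
    by move=> i j; rewrite !inE => hi hj; apply: E_inj b L i j hi hj.
  have -> : [set j : 'I_b.+1 | 0 < j] = [set~ ord0].
    by apply/setP => j; rewrite !inE -(inj_eq val_inj) /= lt0n.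
  by rewrite cardsC1 card_ord addn1.
Qed.

Definition cidx b L (f : {set 'I_b.+1}) : nat :=
  if [pick j : 'I_b.+1 | (0 < j) && (f == E b L j)] is Some j then val j else 0.

Lemma cidxE b L (j : 'I_b.+1) : 0 < j -> cidx b L (E b L j) = j.
Proof.
move=> jp; rewrite /cidx; case: pickP => [i /andP[ip /eqP h]|/(_ j)]; last by rewrite jp eqxx.
by rewrite (E_inj b L i j ip jp (esym h)).
Qed.

Definition col m (hm : 0 < m) (x : nat) : 'I_m := Ordinal (ltn_pmod x hm).

Lemma diff_mod a i j : 0 < a -> i < j -> j - i < a -> i %% a != j %% a.
Proof.
move=> ha ij d; apply/negP => /eqP h.
have : a %| j - i by rewrite -eqn_mod_dvd ?h // ltnW.
move/dvdn_leq; lia.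
Qed.

Lemma getS b k (j1 j2 : 'I_b.+1) : 3 <= k <= b.+1 ->
  exists S : {set 'I_b.+1}, [/\ #|S| = k, ord0 \in S, j1 \in S & j2 \in S].
Proof.
move=> hk.
set X := ord0 |: (j1 |: [set j2]).
have cX : #|X| <= 3.
  rewrite /X cardsU1 cardsU1 cards1; case: (_ \notin _); case: (_ \notin _) => //.
have := @extend _ (k - #|X|) X.
have -> : #|X| + (k - #|X|) = k by lia.
rewrite card_ord => /(_ ltac:(lia)) [S [sub cS]].
exists S; split => //; apply: (subsetP sub); rewrite !inE eqxx ?orbT //.
Qed.

Lemma key (a b x y : nat) : 2 <= a <= b -> 1 <= x <= b -> 1 <= y <= b -> x != y ->
  (par (b - a + 1) x = par (b - a + 1) y \/ x = par (b - a + 1) y \/ par (b - a + 1) x = y) ->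
  x %% a != y %% a.
Proof.
move=> hab hx hy /eqP nxy H; case: (ltngtP x y) => h.
- apply: diff_mod; [lia|lia|].
  move: H; rewrite /par; case: ifP; case: ifP => *; lia.
- rewrite eq_sym; apply: diff_mod; [lia|lia|].
  move: H; rewrite /par; case: ifP; case: ifP => *; lia.
- by case: nxy.
Qed.

Lemma proper_up a b k (hab : 2 <= a <= b) (ha : 0 < a) :
  k_proper_coloring (edg b (b - a + 1)) k (fun f => col a ha (cidx b (b - a + 1) f)).
Proof.
move=> S _; exists setT, (Fall b (b - a + 1)); split; [exact: Fall_tree|split; first exact: subsetT].
move=> f g /in_Fall [i ip ->] /in_Fall [j jp ->] ne /set0Pn [v].
rewrite inE => /andP[vi vj].
rewrite -(inj_eq val_inj) /= !cidxE //.
have nij : i != j by apply: contraNneq ne => ->.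
have hi := ltn_ord i; have hj := ltn_ord j.
apply: (key a b) => //; first (apply/andP; split => //; lia); first (apply/andP; split => //; lia).
move: vi vj; rewrite !inE => /orP[/eqP ei|/eqP ei] /orP[/eqP ej|/eqP ej].
- by left; rewrite -!parOE -ei -ej.
- by right; right; rewrite -!parOE -ei -ej.
- by right; left; rewrite -!parOE -ei -ej.
- by move: nij; rewrite -ei -ej eqxx.
Qed.

Lemma rainbow_up a b k (hb : 0 < b) :
  k_rainbow_coloring (edg b (b - a + 1)) k (fun f => col b hb (cidx b (b - a + 1) f).-1).
Proof.
move=> S _; exists setT, (Fall b (b - a + 1)); split; [exact: Fall_tree|split; first exact: subsetT].
move=> f g /in_Fall [i ip ->] /in_Fall [j jp ->] /(congr1 val) /=.
have hi := ltn_ord i; have hj := ltn_ord j.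
rewrite !cidxE // !modn_small; try lia.
by move=> h; congr E; apply: val_inj => /=; lia.
Qed.

Lemma Lin b L (j : 'I_b.+1) : L <= j -> (inord L : 'I_b.+1) \in E b L j.
Proof.
move=> h; have hj := ltn_ord j; rewrite !inE; case: (ltngtP L j) => h'.
- apply/orP; left; apply/eqP/val_inj; rewrite /= parOE /par inordK; last lia.
  by rewrite leqNgt h'.
- lia.
- apply/orP; right; apply/eqP/val_inj; rewrite /= inordK //; lia.
Qed.

Lemma pigeon (n m : nat) (h : 'I_n -> 'I_m) : m < n ->
  exists t1 t2, t1 != t2 /\ h t1 = h t2.
Proof.
move=> mn.
case: (boolP [exists t1, exists t2, (t1 != t2) && (h t1 == h t2)]).
  by move=> /existsP[t1 /existsP[t2 /andP[n' /eqP e]]]; exists t1, t2.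
move=> Hno; have inj : injective h.
  move=> t1 t2 e; apply/eqP; apply: contraNT Hno => n'; apply/existsP; exists t1.
  by apply/existsP; exists t2; rewrite n' e eqxx.
by have := leq_card _ inj; rewrite !card_ord; lia.
Qed.

Lemma proper_low a b k m (hab : 2 <= a <= b) (hk : 3 <= k <= b.+1) (hm : m < a)
  (c : {set 'I_b.+1} -> 'I_m) : ~ k_proper_coloring (edg b (b - a + 1)) k c.
Proof.
move=> Hc.
pose L := b - a + 1.
pose g (t : 'I_a) : 'I_b.+1 := inord (L + t).
have gE : forall t : 'I_a, nat_of_ord (g t) = L + t.
  by move=> t; rewrite /g inordK //; have := ltn_ord t; lia.
have [t1 [t2 [nt ht]]] := pigeon _ _ (fun t => c (E b L (g t))) hm.
have p1 : 0 < g t1 by rewrite gE; lia.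
have p2 : 0 < g t2 by rewrite gE; lia.
have n12 : g t1 != g t2.
  apply: contra nt => /eqP e; apply/eqP; apply: val_inj => /=.
  by move: (congr1 (@nat_of_ord _) e); rewrite !gE; lia.
have [S [cS s0 s1 s2]] := getS _ k (g t1) (g t2) hk.
have [W [F [tr [sub pr]]]] := Hc S cS.
have f1 := force _ _ _ _ _ tr (subsetP sub _ s0) (subsetP sub _ s1) p1.
have f2 := force _ _ _ _ _ tr (subsetP sub _ s0) (subsetP sub _ s2) p2.
have ne : E b L (g t1) != E b L (g t2).
  by apply: contra n12 => /eqP /(E_inj b L _ _ p1 p2) ->.
have inter : E b L (g t1) :&: E b L (g t2) != set0.
  apply/set0Pn; exists (inord L); rewrite inE !Lin //; rewrite gE; lia.
by have := pr _ _ f1 f2 ne inter; rewrite /= ht eqxx.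
Qed.

Lemma rainbow_low a b k m (hk : 3 <= k <= b.+1) (hm : m < b)
  (c : {set 'I_b.+1} -> 'I_m) : ~ k_rainbow_coloring (edg b (b - a + 1)) k c.
Proof.
move=> Hc.
pose L := b - a + 1.
pose g (t : 'I_b) : 'I_b.+1 := inord t.+1.
have gE : forall t : 'I_b, nat_of_ord (g t) = t.+1.
  by move=> t; rewrite /g inordK //; have := ltn_ord t; lia.
have [t1 [t2 [nt ht]]] := pigeon _ _ (fun t => c (E b L (g t))) hm.
have p1 : 0 < g t1 by rewrite gE; lia.
have p2 : 0 < g t2 by rewrite gE; lia.
have n12 : g t1 != g t2.
  apply: contra nt => /eqP e; apply/eqP; apply: val_inj => /=.
  by move: (congr1 (@nat_of_ord _) e); rewrite !gE; lia.
have [S [cS s0 s1 s2]] := getS _ k (g t1) (g t2) hk.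
have [W [F [tr [sub pr]]]] := Hc S cS.
have f1 := force _ _ _ _ _ tr (subsetP sub _ s0) (subsetP sub _ s1) p1.
have f2 := force _ _ _ _ _ tr (subsetP sub _ s0) (subsetP sub _ s2) p2.
have := pr _ _ f1 f2 ht => /(E_inj b L _ _ p1 p2) e.
by rewrite e eqxx in n12.
Qed.

Theorem mainTheorem14 (a b : nat) (hab : 2 <= a <= b) :
  exists (T : finType) (e : rel T),
    [/\ simple_graph e, graph_connected e, 3 <= #|T| &
      forall k, 3 <= k <= #|T| ->
        proper_index_is e k a /\ rainbow_index_is e k b].
Proof.
exists 'I_b.+1, (edg b (b - a + 1)); split.
- by split; [exact: edg_sym | exact: edg_irr].
- by move=> x y; apply: (@conn_gen b (b - a + 1)) => v vp; apply: edg_par.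
- rewrite card_ord; lia.
- rewrite card_ord => k hk; split; split.
  + have ha : 0 < a by lia.
    by exists (fun f => col a ha (cidx b (b - a + 1) f)); apply: proper_up.
  + move=> m hm [c Hc]; exact: (proper_low a b k m hab hk hm c Hc).
  + have hb : 0 < b by lia.
    by exists (fun f => col b hb (cidx b (b - a + 1) f).-1); apply: rainbow_up.
  + move=> m hm [c Hc]; exact: (rainbow_low a b k m hk hm c Hc).
Qed.
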